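(* Let $\lambda$ be a partition and let $k\geq 3$ be an integer. If $1\leq \ell(\lambda)\leq k-2$ and $\lambda\neq (1),(2),(1,1)$, then \[ \frac{s_\lambda(1^k)}{k}\geq \frac{s_\lambda(1^{k-1})}{k-1}+1. \]
   Context: $s_\lambda$ is the Schur polynomial of $\lambda$, and $s_\lambda(1^m)$ denotes its evaluation at $(1,\dots,1)$ with $m$ ones; equivalently, $s_\lambda(1^m)$ is the number of semistandard Young tableaux of shape $\lambda$ with entries in $\{1,\dots,m\}$ (rows weakly increasing left to right, columns strictly increasing top to bottom). $\ell(\lambda)$ is the number of nonzero parts of $\lambda$. *)

(* Defs.v *)
From HB Require Import structures.
From mathcomp Require Import all_boot all_order all_algebra.
Set Implicit Arguments. Unset Strict Implicit. Unset Printing Implicit Defensive.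

Definition is_partition (la : seq nat) : bool :=
  sorted geq la && all (fun x => 0 < x) la.

Definition plength (la : seq nat) : nat := count (fun x => 0 < x) la.

Definition nrows (la : seq nat) : nat := size la.
Definition ncols (la : seq nat) : nat := foldr maxn 0 la.

Definition in_shape (la : seq nat) (i j : nat) : bool := j < nth 0 la i.

(* A filling of the bounding box with entries in 'I_m (entry e stands for
   the value e+1 in {1,...,m}); cells outside the diagram are forced to 0 so
   that fillings correspond bijectively to tableaux. *)
Definition is_ssyt (la : seq nat) (m : nat)
    (T : {ffun 'I_(nrows la) * 'I_(ncols la) -> 'I_m}) : bool :=
  [forall c : 'I_(nrows la) * 'I_(ncols la),
     ~~ in_shape la c.1 c.2 ==> (val (T c) == 0)] &&
  [forall i : 'I_(nrows la), forall j1 : 'I_(ncols la), forall j2 : 'I_(ncols la),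
     (in_shape la i j1 && in_shape la i j2 && (j1 <= j2)) ==>
       (T (i, j1) <= T (i, j2))] &&
  [forall i1 : 'I_(nrows la), forall i2 : 'I_(nrows la), forall j : 'I_(ncols la),
     (in_shape la i1 j && in_shape la i2 j && (i1 < i2)) ==>
       (T (i1, j) < T (i2, j))].

(* s_la(1^m) = number of semistandard Young tableaux of shape la with
   entries in {1,...,m}. *)
Definition schur_ones (la : seq nat) (m : nat) : nat :=
  #|[set T : {ffun 'I_(nrows la) * 'I_(ncols la) -> 'I_m} | is_ssyt T]|.

(* Main.v *)
Require Import Defs.
From HB Require Import structures.
From mathcomp Require Import all_boot all_order all_algebra.
From mathcomp Require Import zify ring.
Import Order.TTheory GRing.Theory Num.Theory.
Set Implicit Arguments. Unset Strict Implicit. Unset Printing Implicit Defensive.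

Notation cellT la := ('I_(nrows la) * 'I_(ncols la))%type.
Definition SS la m := [set T : {ffun cellT la -> 'I_m} | is_ssyt T].
Definition shp la := [pred c : cellT la | in_shape la c.1 c.2].
Definition vals la m (T : {ffun cellT la -> 'I_m}) : {set 'I_m} :=
  [set T c | c in shp la].
Definition fillc la K (G : cellT la -> 'I_K.+1) : {ffun cellT la -> 'I_K.+1} :=
  [ffun c : cellT la => if in_shape la c.1 c.2 then G c else ord0].

Lemma fillc_ssyt la K (G : cellT la -> 'I_K.+1) :
  (forall (i : 'I_(nrows la)) (j1 j2 : 'I_(ncols la)), in_shape la i j1 -> in_shape la i j2 -> j1 <= j2 -> G (i,j1) <= G (i,j2)) ->
  (forall (i1 i2 : 'I_(nrows la)) (j : 'I_(ncols la)), in_shape la i1 j -> in_shape la i2 j -> i1 < i2 -> G (i1,j) < G (i2,j)) ->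
  fillc G \in SS la K.+1.
Proof.
move=> Hr Hc; rewrite inE /is_ssyt; apply/andP; split; first (apply/andP; split).
- by apply/forallP => c; apply/implyP; rewrite ffunE => /negbTE ->.
- apply/forallP=> i; apply/forallP=> j1; apply/forallP=> j2; apply/implyP.
  case/andP=> /andP[h1 h2] h3; rewrite !ffunE /= h1 h2; exact: Hr.
- apply/forallP=> i1; apply/forallP=> i2; apply/forallP=> j; apply/implyP.
  case/andP=> /andP[h1 h2] h3; rewrite !ffunE /= h1 h2; exact: Hc.
Qed.

Lemma vals_fillc la K (G : cellT la -> 'I_K.+1) :
  vals (fillc G) = [set G c | c in shp la].
Proof.
apply: eq_in_imset => c; rewrite inE /= => h; by rewrite ffunE h.
Qed.

Definition relab la K (i : 'I_K.+1) (T : {ffun cellT la -> 'I_K}) : {ffun cellT la -> 'I_K.+1} :=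
  fillc (fun c => lift i (T c)).

Lemma step1 la K (i : 'I_K.+1) :
  schur_ones la K <= #|[set T in SS la K.+1 | i \notin vals T]|.
Proof.
have inj : {in SS la K &, injective (@relab la K i)}.
  move=> T1 T2; rewrite !inE /is_ssyt => /andP[/andP[/forallP z1 _] _] /andP[/andP[/forallP z2 _] _] E.
  apply/ffunP => c; have := congr1 (fun T : {ffun cellT la -> 'I_K.+1} => T c) E; rewrite /relab /fillc !ffunE.
  case: ifP => h.
    by move/lift_inj.
  move=> _; apply: val_inj; move: (z1 c) (z2 c); rewrite h /= => /eqP -> /eqP -> //.
rewrite /schur_ones -(card_in_imset inj); apply: subset_leq_card.
apply/subsetP => _ /imsetP[T hT ->]; rewrite inE; apply/andP; split.
  apply: fillc_ssyt.
    move: hT; rewrite inE /is_ssyt => /andP[/andP[_ /forallP H] _] r j1 j2 h1 h2 h3.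
    rewrite /= leq_bump2.
    by move: (H r) => /forallP/(_ j1)/forallP/(_ j2)/implyP; apply; rewrite h1 h2 h3.
  move: hT; rewrite inE /is_ssyt => /andP[_ /forallP H] r1 r2 j h1 h2 h3.
  move: (H r1) => /forallP/(_ r2)/forallP/(_ j)/implyP.
  rewrite h1 h2 h3 => /(_ isT); rewrite /= /bump.
  by case: (leqP i (T (r1, j))); case: (leqP i (T (r2, j))) => /=; lia.
rewrite /relab vals_fillc; apply/imsetP => [[c _ E]].
by move: (neq_lift i (T c)); rewrite -E eqxx.
Qed.

Lemma step2 la K :
  K.+1 * schur_ones la K <= \sum_(T in SS la K.+1) (K.+1 - #|vals T|).
Proof.
have -> : K.+1 * schur_ones la K = \sum_(i : 'I_K.+1) schur_ones la K.
  by rewrite sum_nat_const card_ord.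
apply: (@leq_trans (\sum_(i : 'I_K.+1) #|[set T in SS la K.+1 | i \notin vals T]|)).
  by apply: leq_sum => i _; exact: step1.
rewrite (eq_bigr (fun i => \sum_(T in SS la K.+1) (i \notin vals T))); last first.
  move=> i _; rewrite -sum1_card big_mkcond /= [RHS]big_mkcond /=.
  by apply: eq_bigr => T _; rewrite inE; case: (T \in _); case: (i \in _).
rewrite exchange_big /=; apply: leq_sum => T _.
have <- : #|~: vals T| = K.+1 - #|vals T|.
  by have := cardsC (vals T); rewrite card_ord; lia.
rewrite -sum1_card [X in _ <= X]big_mkcond /=; apply: leq_sum => i _.
by rewrite inE; case: (i \in _).
Qed.

Lemma enum_sorted m (S : {set 'I_m}) : sorted (fun x y : 'I_m => x < y) (enum S).
Proof.
have E : enum S = filter (mem S) (enum 'I_m).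
  by rewrite {1}/enum_mem -enumT.
have: sorted (fun x y : 'I_m => x < y) (enum 'I_m).
  by have := iota_ltn_sorted 0 m; rewrite -val_enum_ord sorted_map.
rewrite E; apply: sorted_filter => x y z; exact: ltn_trans.
Qed.

Definition ee K (S : {set 'I_K.+1}) i := nth ord0 (enum S) i.

Lemma ee_lt K (S : {set 'I_K.+1}) i j : i < j -> j < #|S| -> ee S i < ee S j.
Proof.
move=> hij hj; rewrite /ee.
have := @sorted_ltn_nth _ (fun x y : 'I_K.+1 => x < y) (fun x y z => @ltn_trans _ _ _) ord0 _ (enum_sorted S).
rewrite cardE in hj.
by apply; rewrite // inE //; apply: ltn_trans hj.
Qed.

Lemma ee_in K (S : {set 'I_K.+1}) i : i < #|S| -> ee S i \in S.
Proof. by move=> h; rewrite /ee -mem_enum mem_nth // -cardE. Qed.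

Lemma ee_surj K (S : {set 'I_K.+1}) x : x \in S -> exists2 i, i < #|S| & x = ee S i.
Proof.
move=> h; exists (index x (enum S)); first by rewrite cardE index_mem mem_enum.
by rewrite /ee nth_index // mem_enum.
Qed.

Lemma shape_row la i j : in_shape la i j -> i < size la.
Proof. by rewrite /in_shape; case: (ltnP i (size la)) => // h; rewrite nth_default. Qed.

Lemma nth_ncols la i : nth 0 la i <= ncols la.
Proof.
elim: la i => [|a l IH] [|i] //=; rewrite /ncols /=.
  exact: leq_maxl.
apply: leq_trans (IH i) _; exact: leq_maxr.
Qed.

Lemma shape_col la i j : in_shape la i j -> j < ncols la.
Proof. by move=> h; apply: leq_trans h (nth_ncols _ _). Qed.

Lemma part_pos la i : is_partition la -> i < size la -> 0 < nth 0 la i.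
Proof. by case/andP=> _ /all_nthP; apply. Qed.

Lemma plength_size la : is_partition la -> plength la = size la.
Proof. by case/andP=> _; rewrite all_count => /eqP. Qed.

Lemma vals_pos la K (T : {ffun cellT la -> 'I_K.+1}) :
  is_partition la -> 0 < size la -> 0 < #|vals T|.
Proof.
move=> hp hs.
have h0 : 0 < nth 0 la 0 by exact: part_pos.
have hc : 0 < ncols la by apply: leq_trans h0 (nth_ncols _ _).
apply/card_gt0P; exists (T (Ordinal hs, Ordinal hc)); apply/imsetP.
by exists (Ordinal hs, Ordinal hc).
Qed.

Lemma vals_le la K (T : {ffun cellT la -> 'I_K.+1}) : #|vals T| <= K.+1.
Proof. by rewrite -[X in _ <= X](card_ord K.+1) max_card. Qed.

Lemma fam la K (X : finType) (D : {set X}) (g : X -> {ffun cellT la -> 'I_K.+1}) c :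
  {in D &, injective g} ->
  (forall d, d \in D -> g d \in SS la K.+1 /\ c <= #|vals (g d)| - 1) ->
  c * #|D| <= \sum_(T in SS la K.+1) (#|vals T| - 1).
Proof.
move=> inj H.
apply: (@leq_trans (\sum_(T in g @: D) (#|vals T| - 1))); last first.
  rewrite [X in _ <= X]big_mkcond [X in X <= _]big_mkcond /=; apply: leq_sum => T _.
  case: ifP => // /imsetP[d hd ->]; by rewrite (proj1 (H d hd)).
rewrite big_imset //= mulnC -sum_nat_const; apply: leq_sum => d hd.
exact: (proj2 (H d hd)).
Qed.

Lemma famA la K : is_partition la ->
  (size la).-1 * 'C(K.+1, size la) <= \sum_(T in SS la K.+1) (#|vals T| - 1).
Proof.
move=> hp.
have -> : 'C(K.+1, size la) = #|[set S : {set 'I_K.+1} | #|S| == size la]|.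
  by rewrite card_draws card_ord.
have hv : forall S : {set 'I_K.+1}, #|S| = size la ->
    vals (fillc (fun c : cellT la => ee S c.1)) = S.
  move=> S hS; rewrite vals_fillc; apply/eqP; rewrite eqEsubset; apply/andP; split.
    apply/subsetP => _ /imsetP[c hc ->]; apply: ee_in; rewrite hS.
    exact: (shape_row hc).
  apply/subsetP => x /ee_surj[i hi ->]; rewrite hS in hi.
  have h0 : 0 < nth 0 la i by exact: part_pos.
  have hc : 0 < ncols la by apply: leq_trans h0 (nth_ncols _ _).
  by apply/imsetP; exists (Ordinal hi, Ordinal hc).
apply: (@fam la K _ _ (fun S => fillc (fun c : cellT la => ee S c.1))).
  move=> S1 S2; rewrite !inE => /eqP h1 /eqP h2 /= E.
  by rewrite -(hv _ h1) -(hv _ h2) E.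
move=> S; rewrite inE => /eqP hS; split; last by rewrite hv // hS subn1.
apply: fillc_ssyt => /= [i j1 j2 _ _ _|i1 i2 j _ h2 h3]; first by [].
apply: ee_lt => //; rewrite hS; exact: (shape_row h2).
Qed.

Lemma famR1 n K : 2 < n ->
  'C(K.+1, 2) * 2 <= \sum_(T in SS [:: n] K.+1) (#|vals T| - 1).
Proof.
move=> hn.
have hcol : ncols [:: n] = n by rewrite /ncols /= maxn0.
have hrow : forall i : 'I_(nrows [:: n]), nth 0 [:: n] i = n by case=> [[|]].
have r0 : 0 < nrows [:: n] by [].
have c0 : 0 < ncols [:: n] by rewrite hcol; apply: leq_trans hn.
have c1 : n.-1 < ncols [:: n] by rewrite hcol; lia.
have c2 : n.-2 < ncols [:: n] by rewrite hcol; lia.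
pose g (p : {set 'I_K.+1} * bool) := fillc (fun c : cellT [:: n] =>
   if c.2 < n.-1 - p.2 then ee p.1 0 else ee p.1 1).
have hv : forall (S : {set 'I_K.+1}) (b : bool), #|S| = 2 -> vals (g (S, b)) = S.
  move=> S b hS; rewrite vals_fillc; apply/eqP; rewrite eqEsubset; apply/andP; split.
    by apply/subsetP => _ /imsetP[c hc ->]; case: ifP => _; apply: ee_in; rewrite hS.
  apply/subsetP => x /ee_surj[i hi ->]; rewrite hS in hi; apply/imsetP.
  case: i hi => [|[|//]] _.
    exists (Ordinal r0, Ordinal c0); first by rewrite inE /in_shape /=; apply: leq_trans hn.
    by rewrite /=; case: ifP => //; case: b => /=; lia.
  exists (Ordinal r0, Ordinal c1); first by rewrite inE /in_shape /=; lia.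
  by rewrite /=; case: ifP => //; case: b => /=; lia.
have -> : 'C(K.+1, 2) * 2 = 1 * #|setX [set S : {set 'I_K.+1} | #|S| == 2] [set: bool]|.
  by rewrite cardsX card_draws card_ord cardsT card_bool mul1n.
apply: (@fam _ K _ _ g).
  move=> [S1 b1] [S2 b2]; rewrite !inE /= andbT andbT => /eqP h1 /eqP h2 E.
  have eS : S1 = S2 by rewrite -(hv _ b1 h1) -(hv _ b2 h2) E.
  subst S2; congr pair.
  have := congr1 (fun T : {ffun cellT [:: n] -> 'I_K.+1} => T (Ordinal r0, Ordinal c2)) E.
  rewrite /g /fillc !ffunE /= /in_shape /=.
  have lt01 := @ee_lt K S1 0 1 isT; rewrite h1 in lt01.
  have -> : n.-2 < n by lia.
  have e1 : (n.-2 < n.-1 - 1) = false by lia.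
  have e2 : (n.-2 < n.-1 - 0) = true by lia.
  clear E; case: b1; case: b2 => //=; rewrite e1 e2 => E2;
    move: (lt01 isT); rewrite E2 ltnn //.
move=> [S b] hd; have hS : #|S| = 2 by move: hd; rewrite !inE /= andbT => /eqP.
split; last by rewrite hv // hS.
rewrite /g; apply: fillc_ssyt => /= [i j1 j2 _ _ h|i1 i2 j _ _]; last first.
  by case: i1 => [[|//] ?]; case: i2 => [[|//] ?].
have lt01 := @ee_lt K S 0 1 isT; rewrite hS in lt01.
case: ifP => h1; case: ifP => h2 //; try lia.
Qed.

Lemma famR2 a b K : 0 < b -> b <= a -> 1 < a ->
  2 * ('C(K.+1, 3) * 2) <= \sum_(T in SS [:: a; b] K.+1) (#|vals T| - 1).
Proof.
move=> hb hba ha.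
have hcol : ncols [:: a; b] = a by rewrite /ncols /= maxn0; apply/maxn_idPl.
have r0 : 0 < nrows [:: a; b] by [].
have r1 : 1 < nrows [:: a; b] by [].
have c0 : 0 < ncols [:: a; b] by rewrite hcol; lia.
have c1 : 1 < ncols [:: a; b] by rewrite hcol; lia.
have ca : a.-1 < ncols [:: a; b] by rewrite hcol; lia.
pose g (p : {set 'I_K.+1} * bool) := fillc (fun c : cellT [:: a; b] =>
   let x := ee p.1 0 in let y := ee p.1 1 in let z := ee p.1 2 in
   if p.2 then (if c.1 == 0 :> nat then (if c.2 < a.-1 then x else y) else z)
   else (if c.1 == 0 :> nat then (if (c.2 == 0 :> nat) || (1 < b) then x else z)
         else (if c.2 == 0 :> nat then y else z))).
have hv : forall (S : {set 'I_K.+1}) (f : bool), #|S| = 3 -> vals (g (S, f)) = S.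
  move=> S f hS; rewrite vals_fillc; apply/eqP; rewrite eqEsubset; apply/andP; split.
    apply/subsetP => _ /imsetP[c hc ->] /=.
    by case: ifP => _; case: ifP => _; try case: ifP => _; apply: ee_in; rewrite hS.
  apply/subsetP => x /ee_surj[i hi ->]; rewrite hS in hi; apply/imsetP.
  case: i hi => [|[|[|//]]] _.
  - exists (Ordinal r0, Ordinal c0); first by rewrite inE /in_shape /=; lia.
    by rewrite /=; case: f => //=; case: ifP => //; lia.
  - case: f.
      exists (Ordinal r0, Ordinal ca); first by rewrite inE /in_shape /=; lia.
      by rewrite /=; case: ifP => //; lia.
    by exists (Ordinal r1, Ordinal c0); first by rewrite inE /in_shape /=; lia.
  - case: f.
      by exists (Ordinal r1, Ordinal c0); first by rewrite inE /in_shape /=; lia.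
    case: (ltnP 1 b) => hb2.
      by exists (Ordinal r1, Ordinal c1); first by rewrite inE /in_shape /=; lia.
    exists (Ordinal r0, Ordinal c1); first by rewrite inE /in_shape /=; lia.
    by [].

have -> : 'C(K.+1, 3) * 2 = #|setX [set S : {set 'I_K.+1} | #|S| == 3] [set: bool]|.
  by rewrite cardsX card_draws card_ord cardsT card_bool.
apply: (@fam _ K _ _ g).
  move=> [S1 f1] [S2 f2]; rewrite !inE /= andbT andbT => /eqP h1 /eqP h2 E.
  have eS : S1 = S2 by rewrite -(hv _ f1 h1) -(hv _ f2 h2) E.
  subst S2; congr pair.
  have := congr1 (fun T : {ffun cellT [:: a; b] -> 'I_K.+1} => T (Ordinal r1, Ordinal c0)) E.
  rewrite /g /fillc !ffunE /= /in_shape /= hb.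
  have lt12 := @ee_lt K S1 1 2 isT; rewrite h1 in lt12.
  clear E; case: f1; case: f2 => //= E2;
    move: (lt12 isT); rewrite E2 ltnn //.
move=> [S f] hd; have hS : #|S| = 3 by move: hd; rewrite !inE /= andbT => /eqP.
clear hd.
split; last by rewrite hv // hS.
have lt01 := @ee_lt K S 0 1 isT; rewrite hS in lt01; have {lt01}lt01 := lt01 isT.
have lt12 := @ee_lt K S 1 2 isT; rewrite hS in lt12; have {lt12}lt12 := lt12 isT.
rewrite /g; apply: fillc_ssyt => /= [i j1 j2 h1 h2 h|i1 i2 j h1 h2 h].
  move: h1 h2; rewrite /in_shape.
  case: i => [[|[|//]] ?] /= h1 h2; case: f => /=;
    repeat (case: ifP => /=); lia.
move: h1 h2; rewrite /in_shape.
case: i1 h => [[|[|//]] ?]; case: i2 => [[|[|//]] ?] //= _ h1 h2; case: f => /=;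
  repeat (case: ifP => /=); lia.
Qed.

Lemma bin_step n j : 2 * j < n -> 'C(n, j) <= 'C(n, j.+1).
Proof. move=> h; have := mul_bin_left n j; nia. Qed.

Lemma bin_ge2 n r : 2 <= r -> r <= n - 2 -> 'C(n, 2) <= 'C(n, r).
Proof.
have L : forall s, 2 <= s -> 2 * s <= n -> 'C(n, 2) <= 'C(n, s).
  elim=> [|s IH] // hs h2; case: (ltnP 2 s.+1) => h3; last by have -> : s.+1 = 2 by lia.
  apply: leq_trans (IH _ _) (bin_step _); lia.
move=> h1 h2; case: (leqP (2 * r) n) => h3; first exact: L.
rewrite -(@bin_sub n r); last by lia.
apply: L; lia.
Qed.

Lemma key la K : is_partition la -> 1 <= size la <= K.+1 - 2 ->
  la != [:: 1] -> la != [:: 2] -> la != [:: 1; 1] ->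
  K.+1 * K <= \sum_(T in SS la K.+1) (#|vals T| - 1).
Proof.
move=> hp /andP[h1 h2] n1 n2 n11.
have b2 := mul_bin_left K.+1 1; rewrite bin1 subn1 /= in b2.
case: la hp h1 h2 n1 n2 n11 => [|a [|b [|c l]]] //= hp _ h2 n1 n2 n11.
- have a0 : 0 < a := @part_pos [:: a] 0 hp isT.
  have a3 : 2 < a by move: n1 n2; rewrite !eqseq_cons /= !andbT; lia.
  apply: leq_trans (famR1 K a3); lia.
- have b0 : 0 < b := @part_pos [:: a; b] 1 hp isT.
  have ba : b <= a by case/andP: hp => /andP[].
  have a2 : 1 < a by move: n11; rewrite !eqseq_cons /= !andbT; lia.
  apply: leq_trans (famR2 K b0 ba a2).
  have b3 := mul_bin_left K.+1 2; rewrite /= in b3.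
  nia.
- apply: leq_trans (famA K hp); rewrite /=.
  have := @bin_ge2 K.+1 (size l).+3 isT h2; nia.
Qed.

Unset Implicit Arguments.
Theorem lemma4p4 (la : seq nat) (k : nat) :
  is_partition la -> 3 <= k ->
  1 <= plength la <= k - 2 ->
  la != [:: 1] -> la != [:: 2] -> la != [:: 1; 1] ->
  ((schur_ones la (k - 1))%:R / (k - 1)%:R + 1 <=
     (schur_ones la k)%:R / k%:R :> rat)%R.
Proof.
move=> hp hk hl n1 n2 n11.
case: k hk hl => [//|K] hk hl; rewrite subn1 /=.
rewrite (plength_size hp) in hl.
have hS1 := step2 la K.
have hS2 := @key la K hp hl n1 n2 n11.
have hsum : \sum_(T in SS la K.+1) (K.+1 - #|vals T|) + \sum_(T in SS la K.+1) (#|vals T| - 1)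
    = K * schur_ones la K.+1.
  rewrite -big_split /= /schur_ones -/(SS la K.+1) mulnC -sum_nat_const.
  apply: eq_bigr => T _.
  have := vals_le T; have := @vals_pos la K T hp; case/andP: hl => h1 _; move/(_ h1).
  move: #|vals T| => v; lia.
have main : K.+1 * schur_ones la K + K.+1 * K <= K * schur_ones la K.+1 by lia.
have K0 : (K%:R != 0 :> rat)%R by rewrite pnatr_eq0; lia.
have K1 : (K.+1%:R != 0 :> rat)%R by rewrite pnatr_eq0.
have -> : ((schur_ones la K)%:R / K%:R + 1 =
   (K.+1 * schur_ones la K + K.+1 * K)%:R / (K * K.+1)%:R :> rat)%R.
  by rewrite !natrD !natrM; field; rewrite nat1r K0 K1.
apply: (@le_trans _ _ ((K * schur_ones la K.+1)%:R / (K * K.+1)%:R)%R).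
  apply: ler_wpM2r; first by rewrite invr_ge0 ler0n.
  by rewrite ler_nat.
rewrite le_eqVlt; apply/orP; left; apply/eqP.
by rewrite !natrM; field; rewrite nat1r K0 K1.
Qed.
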